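(* Let $f:(k+1)^V\to\mathbb{R}$ be $k$-submodular with multilinear extension $F$, and let $e_{i,j}\in\mathbb{R}^{n\times k}$ denote the standard basis vector with a $1$ in coordinate $(i,j)$. Then: (1) for every $x\in\mathcal P$ and every direction $d\in\mathbb{R}^{n\times k}$ with $d\ge 0$, the function $t\mapsto F(x+td)$ is concave on $\{t: x+td\in\mathcal P\}$; (2) for every $x\in\mathcal P$ and all $i_1\neq i_2\in[n]$, $j_1,j_2\in[k]$, the function $t\mapsto F(x+t(e_{i_1,j_1}-e_{i_2,j_2}))$ is convex on $\{t: x+t(e_{i_1,j_1}-e_{i_2,j_2})\in\mathcal P\}$; (3) for all $i\in[n]$, $j\in[k]$, $\partial F/\partial x_{i,j}$ does not depend on the coordinates $x_{i,1},\dots,x_{i,k}$ (it is constant when all $x_{i',j'}$ with $i'\neq i$ are fixed); (4) if $x,y\in\mathcal P$ with $x\le y$ entrywise, then $\frac{\partial F}{\partial x_{i,j}}(x)\ge\frac{\partial F}{\partial x_{i,j}}(y)$ for all $i\in[n]$, $j\in[k]$.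
   Context: Let $V=[n]=\{1,\dots,n\}$ and let $k\ge 1$ be an integer. Write $(k+1)^V$ for the set of $k$-tuples $S=(S_1,\dots,S_k)$ of pairwise disjoint subsets of $V$. For $S,T\in(k+1)^V$ let $S\sqcap T=(S_1\cap T_1,\dots,S_k\cap T_k)$ and let $S\sqcup T$ be the tuple whose $j$-th component is $(S_j\cup T_j)\setminus\bigcup_{l\neq j}(S_l\cup T_l)$. A function $f:(k+1)^V\to\mathbb{R}$ is $k$-submodular if $f(S)+f(T)\ge f(S\sqcap T)+f(S\sqcup T)$ for all $S,T\in(k+1)^V$. Let $\mathcal P=\{x\in[0,1]^{n\times k}:\sum_{j=1}^k x_{i,j}\le 1\ \forall i\in[n]\}$. The multilinear extension of $f$ is the polynomial $F(x)=\sum_{S\in(k+1)^V} f(S_1,\dots,S_k)\Big(\prod_{j\in[k]}\prod_{i\in S_j}x_{i,j}\Big)\prod_{i\in V\setminus\bigcup_j S_j}\Big(1-\sum_{j=1}^k x_{i,j}\Big)$, considered on $\mathcal P$. *)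

(* Defs.v *)
From HB Require Import structures.
From mathcomp Require Import all_boot all_order all_algebra.
From mathcomp Require Import all_classical all_reals.
From mathcomp Require Import topology normedtype derive.
Set Implicit Arguments. Unset Strict Implicit. Unset Printing Implicit Defensive.
Import Order.TTheory GRing.Theory Num.Theory numFieldNormedType.Exports.
Local Open Scope ring_scope.

(* Elements of (k+1)^V, V = 'I_n, are k-tuples S = (S_1,...,S_k) of subsets
   of V that are pairwise disjoint. *)
Definition ktuple (n k : nat) := {ffun 'I_k -> {set 'I_n}}.

Definition pw_disjoint (n k : nat) (S : ktuple n k) : bool :=
  [forall j1 : 'I_k, forall j2 : 'I_k,
     (j1 != j2) ==> [disjoint S j1 & S j2]].

Definition kmeet (n k : nat) (S T : ktuple n k) : ktuple n k :=
  [ffun j => S j :&: T j].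

Definition kjoin (n k : nat) (S T : ktuple n k) : ktuple n k :=
  [ffun j => (S j :|: T j) :\: \bigcup_(l < k | l != j) (S l :|: T l)].

(* k-submodularity (only the values on pairwise-disjoint tuples matter). *)
Definition k_submodular (R : realType) (n k : nat) (f : ktuple n k -> R) : Prop :=
  forall S T : ktuple n k, pw_disjoint S -> pw_disjoint T ->
    f (kmeet S T) + f (kjoin S T) <= f S + f T.

Definition inP (R : realType) (n k : nat) (x : 'M[R]_(n, k)) : Prop :=
  (forall i j, 0 <= x i j <= 1) /\ (forall i, \sum_(j < k) x i j <= 1).

Definition multilinF (R : realType) (n k : nat) (f : ktuple n k -> R)
    (x : 'M[R]_(n, k)) : R :=
  \sum_(S : ktuple n k | pw_disjoint S)
     f S * (\prod_(j < k) \prod_(i in S j) x i j)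
         * \prod_(i < n | i \notin \bigcup_(j < k) S j) (1 - \sum_(j < k) x i j).

Definition partialF (R : realType) (n k : nat) (f : ktuple n k -> R)
    (i : 'I_n) (j : 'I_k) (x : 'M[R]_(n, k)) : R :=
  derive1 (fun t : R => multilinF f (x + t *: delta_mx i j)) 0.

Definition concave_on (R : realType) (D : R -> Prop) (g : R -> R) : Prop :=
  forall a b l : R, D a -> D b -> 0 <= l <= 1 ->
    (1 - l) * g a + l * g b <= g ((1 - l) * a + l * b).

Definition convex_on (R : realType) (D : R -> Prop) (g : R -> R) : Prop :=
  forall a b l : R, D a -> D b -> 0 <= l <= 1 ->
    g ((1 - l) * a + l * b) <= (1 - l) * g a + l * g b.

(* Main.v *)
Require Import Defs.
From HB Require Import structures.
From mathcomp Require Import all_boot all_order all_algebra.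
From mathcomp Require Import all_classical all_reals.
From mathcomp Require Import topology normedtype derive.
From mathcomp Require Import ring lra.
Import Order.TTheory GRing.Theory Num.Theory numFieldNormedType.Exports.
Local Open Scope ring_scope.
Set Implicit Arguments. Unset Strict Implicit. Unset Printing Implicit Defensive.
Section ML.
Variables (R : realType) (n k : nat).
Local Notation sig := {ffun 'I_n -> option 'I_k}.
Local Notation mat := 'M[R]_(n, k).

Definition setv (s : sig) (m : 'I_n) (c : option 'I_k) : sig :=
  [ffun i => if i == m then c else s i].

Lemma setvE s m c i : setv s m c i = if i == m then c else s i.
Proof. by rewrite ffunE. Qed.

Lemma setv_setv s m c c' : setv (setv s m c) m c' = setv s m c'.
Proof. by apply/ffunP => i; rewrite !setvE; case: (i == m). Qed.

Lemma setv_id s m : setv s m (s m) = s.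
Proof. by apply/ffunP => i; rewrite setvE; case: eqP => [->|]. Qed.

Lemma setv_same s m c : setv s m c m = c.
Proof. by rewrite setvE eqxx. Qed.

Definition pw (c : option 'I_k) (x : mat) (i : 'I_n) : R :=
  match c with Some j => x i j | None => 1 - \sum_(j < k) x i j end.

Definition wt (s : sig) (x : mat) : R := \prod_(i < n) pw (s i) x i.
Definition ML (h : sig -> R) (x : mat) : R := \sum_(s : sig) h s * wt s x.
Definition W (m : 'I_n) (s : sig) (x : mat) : R :=
  \prod_(i < n | i != m) pw (s i) x i.
Definition Aa (m : 'I_n) (h : sig -> R) (x : mat) : R :=
  \sum_(s : sig | s m == None) h s * W m s x.
Definition Bb (m : 'I_n) (j : 'I_k) (h : sig -> R) (x : mat) : R :=
  \sum_(s : sig | s m == None) (h (setv s m (Some j)) - h s) * W m s x.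

Lemma split_sum (m : 'I_n) (F : sig -> R) :
  \sum_(s : sig) F s = \sum_(s : sig | s m == None) \sum_(c : option 'I_k) F (setv s m c).
Proof.
rewrite (partition_big (fun s => setv s m None) (fun s : sig => s m == None)); last first.
  by move=> s _; rewrite setv_same.
apply: eq_bigr => t /eqP tm.
rewrite (reindex_onto (fun c => setv t m c) (fun s : sig => s m)); last first.
  move=> s /eqP <-; rewrite setv_setv; exact: setv_id.
apply: eq_bigl => c; rewrite setv_setv setv_same eqxx andbT.
by apply/eqP; rewrite -tm setv_id.
Qed.

Lemma sum_option (F : option 'I_k -> R) :
  \sum_(c : option 'I_k) F c = F None + \sum_(j < k) F (Some j).
Proof.
rewrite (bigD1 None) //=; congr (_ + _).
rewrite (reindex_omap (fun j : 'I_k => Some j) (fun c => c)); last first.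
  by case.
by apply: eq_bigl => j; rewrite eqxx.
Qed.

Lemma wt_split m s x : wt s x = pw (s m) x m * W m s x.
Proof. by rewrite /wt (bigD1 m). Qed.

Lemma W_setv m s c x : W m (setv s m c) x = W m s x.
Proof. by apply: eq_bigr => i /negbTE im; rewrite setvE im. Qed.

Lemma rowdec m h x : ML h x = Aa m h x + \sum_(j < k) x m j * Bb m j h x.
Proof.
rewrite /ML (split_sum m) /Aa /Bb.
under [X in _ + X]eq_bigr do rewrite mulr_sumr.
rewrite [X in _ + X]exchange_big /= -big_split /=.
apply: eq_bigr => s /eqP sm.
rewrite sum_option.
have -> : setv s m None = s by rewrite -sm setv_id.
rewrite (wt_split m) sm /=.
have -> : \sum_(j < k) h (setv s m (Some j)) * wt (setv s m (Some j)) x =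
   \sum_(j < k) h (setv s m (Some j)) * (x m j * W m s x).
  by apply: eq_bigr => j _; rewrite (wt_split m) setv_same W_setv.
have E1 : \sum_(j < k) x m j * ((h (setv s m (Some j)) - h s) * W m s x) =
   \sum_(j < k) h (setv s m (Some j)) * (x m j * W m s x) - h s * (\sum_(j < k) x m j) * W m s x.
  rewrite mulr_sumr mulr_suml -sumrB; apply: eq_bigr => j _; ring.
rewrite E1; ring.
Qed.
Definition agree (r : 'I_n) (v v' : mat) := forall i j, i != r -> v i j = v' i j.

Lemma pw_eq r (v v' : mat) c i : agree r v v' -> i != r -> pw c v i = pw c v' i.
Proof.
move=> A ir; case: c => [j|] /=; first exact: A.
by congr (_ - _); apply: eq_bigr => j _; apply: A.
Qed.

Lemma W_eq r s v v' : agree r v v' -> W r s v = W r s v'.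
Proof. by move=> A; apply: eq_bigr => i ir; rewrite (pw_eq _ A ir). Qed.

Lemma Aa_eq r h v v' : agree r v v' -> Aa r h v = Aa r h v'.
Proof. by move=> A; apply: eq_bigr => s _; rewrite (W_eq s A). Qed.

Lemma Bb_eq r j h v v' : agree r v v' -> Bb r j h v = Bb r j h v'.
Proof. by move=> A; apply: eq_bigr => s _; rewrite (W_eq s A). Qed.

Lemma rowstep r h v v' : agree r v v' ->
  ML h v' - ML h v = \sum_(j < k) (v' r j - v r j) * Bb r j h v.
Proof.
move=> A; rewrite (rowdec r h v') (rowdec r h v) (Aa_eq h A).
under eq_bigr do rewrite -(Bb_eq _ h A).
have -> : forall a b c : R, a + b - (a + c) = b - c by move=> *; ring.
rewrite -sumrB; apply: eq_bigr => j _; by rewrite mulrBl.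
Qed.

Lemma rowstep_delta r j h x t :
  ML h (x + t *: delta_mx r j) = ML h x + t * Bb r j h x.
Proof.
have A : agree r x (x + t *: delta_mx r j).
  by move=> i j' ir; rewrite !mxE (negbTE ir) /= mulr0 addr0.
suff S : ML h (x + t *: delta_mx r j) - ML h x = t * Bb r j h x.
  by rewrite -S [ML h x + _]addrC subrK.
rewrite (rowstep h A) (bigD1 j) //= big1 ?addr0.
  by rewrite !mxE !eqxx /= mulr1 addrC addrK.
by move=> j' /negbTE jj; rewrite !mxE jj andbF mulr0 addr0 subrr mul0r.
Qed.

Definition dh (m : 'I_n) (j : 'I_k) (h : sig -> R) (s : sig) : R :=
  h (setv s m (Some j)) - h (setv s m None).

Lemma Bml m j h x : Bb m j h x = ML (dh m j h) x.
Proof.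
rewrite (rowdec m) big1 ?addr0.
  apply: eq_bigr => s /eqP sm; congr (_ * _); rewrite /dh.
  by have -> : setv s m None = s by rewrite -sm setv_id.
move=> j' _; rewrite /Bb big1 ?mulr0 // => s _.
by rewrite /dh !setv_setv subrr mul0r.
Qed.

Definition le_sig (s t : sig) := forall i, s i = None \/ s i = t i.
Definition anti (g : sig -> R) := forall s t, le_sig s t -> g t <= g s.
Definition rowok (x : mat) := forall i c, 0 <= pw c x i.

Lemma Bneg m j g x : anti g -> rowok x -> Bb m j g x <= 0.
Proof.
move=> ag ok; apply: sumr_le0 => s /eqP sm.
apply: mulr_le0_ge0; last by apply: prodr_ge0 => i _; apply: ok.
rewrite subr_le0; apply: ag => i; rewrite setvE.
by case: eqP => [->|]; [left|right].
Qed.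
Definition hyb (N : nat) (z w : mat) : mat :=
  \matrix_(i, j) if (i < N)%N then w i j else z i j.

Definition lem (z w : mat) := forall i j, z i j <= w i j.

Lemma tele_aux h z w N : (N <= n)%N ->
  ML h (hyb N z w) - ML h z =
  \sum_(m : 'I_n | (m < N)%N) \sum_(j < k) (w m j - z m j) * Bb m j h (hyb m z w).
Proof.
elim: N => [|N IH] hN.
  have -> : hyb 0 z w = z by apply/matrixP => i j; rewrite mxE.
  by rewrite subrr big_pred0.
pose i0 := Ordinal hN.
have A : agree i0 (hyb N z w) (hyb N.+1 z w).
  move=> i j ii0; rewrite !mxE.
  suff -> : (i < N.+1)%N = (i < N)%N by [].
  rewrite ltnS leq_eqVlt.
  suff -> : (i == N :> nat) = false by [].
  by apply/negbTE; apply: contra ii0 => /eqP e; apply/eqP/val_inj.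
have -> : ML h (hyb N.+1 z w) - ML h z =
   (ML h (hyb N.+1 z w) - ML h (hyb N z w)) + (ML h (hyb N z w) - ML h z).
  by rewrite addrA subrK.
rewrite (rowstep h A) (IH (ltnW hN)) [RHS](bigD1 i0) /=; last by rewrite ltnSn.
congr (_ + _).
  by apply: eq_bigr => j _; rewrite !mxE /= ltnSn ltnn.
apply: eq_bigl => i; rewrite ltnS.
case: (ltnP i N) => iN.
  apply/esym/andP; split; first exact: ltnW.
  by apply/eqP => e; move: iN; rewrite e /= ltnn.
apply/esym/negbTE; apply/andP => -[iN' /eqP]; apply.
by apply/val_inj/eqP; rewrite /= eqn_leq iN' iN.
Qed.

Lemma tele h z w : ML h w - ML h z =
  \sum_(m : 'I_n) \sum_(j < k) (w m j - z m j) * Bb m j h (hyb m z w).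
Proof.
have -> : w = hyb n z w by apply/matrixP => i j; rewrite mxE ltn_ord.
rewrite (tele_aux h z w (leqnn n)); apply: eq_big => [m|m _]; first by rewrite ltn_ord.
apply: eq_bigr => j _; congr (_ * _).
  by rewrite !mxE ltn_ord.
congr (Bb _ _ _ _); apply/matrixP => i j'; rewrite !mxE ltn_ord.
by case: ifP.
Qed.
Lemma inP_rowok (x : mat) : inP x -> rowok x.
Proof.
case=> H1 H2 i [j|] /=; first by case/andP: (H1 i j).
by rewrite subr_ge0.
Qed.

Lemma sandwich (z y w : mat) : lem z y -> lem y w -> inP z -> inP w -> inP y.
Proof.
move=> zy yw [Hz1 Hz2] [Hw1 Hw2]; split.
  move=> i j; case/andP: (Hz1 i j) => z0 _; case/andP: (Hw1 i j) => _ w1.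
  by rewrite (le_trans z0 (zy i j)) (le_trans (yw i j) w1).
move=> i; apply: le_trans (Hw2 i); apply: ler_sum => j _; exact: yw.
Qed.

Lemma hyb_between N (z w : mat) : lem z w -> lem z (hyb N z w) /\ lem (hyb N z w) w.
Proof. by move=> zw; split=> i j; rewrite mxE; case: ifP. Qed.

Lemma hyb_mono N (z1 w1 z2 w2 : mat) : lem z1 z2 -> lem w1 w2 ->
  lem (hyb N z1 w1) (hyb N z2 w2).
Proof. by move=> H1 H2 i j; rewrite !mxE; case: ifP. Qed.

Lemma ML_anti g (z w : mat) : anti g -> inP z -> inP w -> lem z w -> ML g w <= ML g z.
Proof.
move=> ag Pz Pw zw; rewrite -subr_le0 tele.
apply: sumr_le0 => m _; apply: sumr_le0 => j _.
apply: mulr_ge0_le0; first by rewrite subr_ge0.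
apply: Bneg => //; apply: inP_rowok.
have [H1 H2] := hyb_between m zw.
exact: sandwich H1 H2 Pz Pw.
Qed.
Definition toK (s : sig) : ktuple n k := [ffun j => [set i | s i == Some j]].
Definition ofK (S : ktuple n k) : sig := [ffun i => [pick j | i \in S j]].

Lemma toKE s j i : (i \in toK s j) = (s i == Some j).
Proof. by rewrite ffunE inE. Qed.

Lemma toK_disj s : pw_disjoint (toK s).
Proof.
apply/forallP => j1; apply/forallP => j2; apply/implyP => ne.
rewrite disjoint_subset; apply/fintype.subsetP => i; rewrite !inE !toKE => /eqP ->.
by apply: contra ne => /eqP [] ->.
Qed.

Lemma ofK_toK s : ofK (toK s) = s.
Proof.
apply/ffunP => i; rewrite ffunE; case: pickP => [j|none].
  by rewrite toKE => /eqP.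
by case E: (s i) => [j|] //; move: (none j); rewrite toKE E eqxx.
Qed.

Lemma toK_ofK S : pw_disjoint S -> toK (ofK S) = S.
Proof.
move=> dS; apply/ffunP => j; apply/setP => i; rewrite toKE ffunE.
case: pickP => [j' ij'|none]; last by rewrite none.
case: (eqVneq j' j) => [e|ne]; first by rewrite -e eqxx ij'.
have : [disjoint S j' & S j].
  by move/forallP: dS => /(_ j') /forallP /(_ j) /implyP; apply.
move/disjointFr => /(_ _ ij') ->.
by apply/negbTE; apply: contra ne => /eqP [] ->.
Qed.

Lemma ML_eq (f : ktuple n k -> R) x : multilinF f x = ML (fun s => f (toK s)) x.
Proof.
rewrite /multilinF (reindex_onto toK ofK); last exact: toK_ofK.
apply: eq_big => [s|s _]; first by rewrite toK_disj ofK_toK eqxx.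
rewrite -mulrA; congr (_ * _).
have E1 : \prod_(j < k) \prod_(i in toK s j) x i j =
    \prod_(i < n) (if s i is Some j then x i j else 1).
  under eq_bigr do rewrite big_mkcond /=.
  rewrite exchange_big /=; apply: eq_bigr => i _.
  under eq_bigr do rewrite toKE.
  case: (s i) => [j0|]; last by rewrite big1.
  rewrite (bigD1 j0) //= eqxx big1 ?mulr1 // => j ne.
  by case: eqP => // -[] e; move: ne; rewrite e eqxx.
have E2 : \prod_(i < n | i \notin \bigcup_(j < k) toK s j) (1 - \sum_(j < k) x i j) =
    \prod_(i < n) (if s i is None then 1 - \sum_(j < k) x i j else 1).
  rewrite big_mkcond /=; apply: eq_bigr => i _.
  case E: (s i) => [j0|].
    suff -> : i \in \bigcup_(j < k) toK s j by [].
    by apply/bigcupP; exists j0 => //; rewrite toKE E.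
  suff -> : i \notin \bigcup_(j < k) toK s j by [].
  by apply/bigcupP => -[j _]; rewrite toKE E.
rewrite E1 E2 -big_split /=; apply: eq_bigr => i _.
by case: (s i) => [j|] /=; rewrite ?mulr1 ?mul1r.
Qed.

Lemma meet_join (s t : sig) m j : le_sig s t -> t m = None ->
  kmeet (toK (setv s m (Some j))) (toK t) = toK s /\
  kjoin (toK (setv s m (Some j))) (toK t) = toK (setv t m (Some j)).
Proof.
move=> le tm.
have sm : s m = None by case: (le m) => ->.
split.
  apply/ffunP => l; apply/setP => i; rewrite ffunE inE !toKE setvE.
  case: (eqVneq i m) => [->|ne]; first by rewrite tm sm andbF.
  by case: (le i) => ->; rewrite ?andbb.
set u := setv t m (Some j).
have key : forall l, toK (setv s m (Some j)) l :|: toK t l = toK u l.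
  move=> l; apply/setP => i; rewrite inE !toKE !setvE.
  case: (eqVneq i m) => [->|ne]; first by rewrite tm orbF.
  by case: (le i) => ->; rewrite ?orbb.
apply/ffunP => l; rewrite /kjoin ffunE key.
under eq_bigr do rewrite key.
apply/setP => i; rewrite inE.
case: (boolP (i \in toK u l)) => H; rewrite ?andbF ?andbT //.
apply/bigcupP => -[l' ne]; move: H; rewrite !toKE => /eqP -> /eqP [] e.
by move: ne; rewrite e eqxx.
Qed.

Lemma anti_dh (f : ktuple n k -> R) m j : k_submodular f ->
  anti (dh m j (fun s => f (toK s))).
Proof.
move=> fs s t le; rewrite /dh.
set s0 := setv s m None; set t0 := setv t m None.
have le0 : le_sig s0 t0.
  by move=> i; rewrite !setvE; case: (i == m); [left|apply: le].
have t0m : t0 m = None by rewrite setv_same.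
have [Em Ej] := meet_join j le0 t0m.
have := fs _ _ (toK_disj (setv s0 m (Some j))) (toK_disj t0).
rewrite Em Ej !setv_setv.
move=> H; lra.
Qed.

Lemma d1 (a b : R) : derive1 (fun t : R => a + t * b) 0 = b.
Proof.
rewrite derive1E.
have -> : (fun t : R => a + t * b) = (cst a) + (fun t => b * id t).
  by apply/funext => t /=; rewrite mulrC.
rewrite deriveD // derive_cst add0r.
by rewrite deriveMl // derive_id mulr1.
Qed.

Lemma partialE (f : ktuple n k -> R) i j x :
  partialF f i j x = Bb i j (fun s => f (toK s)) x.
Proof.
rewrite /partialF.
have -> : (fun t => multilinF f (x + t *: delta_mx i j)) =
   (fun t => ML (fun s => f (toK s)) x + t * Bb i j (fun s => f (toK s)) x).
  by apply/funext => t; rewrite ML_eq rowstep_delta.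
exact: d1.
Qed.

Lemma tele_line h (x d : mat) p q :
  ML h (x + q *: d) - ML h (x + p *: d) =
  (q - p) * \sum_(m : 'I_n) \sum_(j < k) d m j * Bb m j h (hyb m (x + p *: d) (x + q *: d)).
Proof.
rewrite tele mulr_sumr; apply: eq_bigr => m _; rewrite mulr_sumr.
by apply: eq_bigr => j _; rewrite !mxE; ring.
Qed.

Lemma line_le (x d : mat) p q : (forall i j, 0 <= d i j) -> p <= q ->
  lem (x + p *: d) (x + q *: d).
Proof. by move=> dp pq i j; rewrite !mxE lerD2l ler_wpM2r. Qed.

Lemma concave_core (f : ktuple n k -> R) (x d : mat) a b l :
  k_submodular f -> (forall i j, 0 <= d i j) ->
  inP (x + a *: d) -> inP (x + b *: d) -> 0 <= l <= 1 -> a <= b ->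
  (1 - l) * multilinF f (x + a *: d) + l * multilinF f (x + b *: d) <=
  multilinF f (x + ((1 - l) * a + l * b) *: d).
Proof.
move=> fs dp Pa Pb /andP [l0 l1] ab.
set c := (1 - l) * a + l * b.
have ac : a <= c by rewrite /c; nra.
have cb : c <= b by rewrite /c; nra.
have lac := line_le x dp ac; have lcb := line_le x dp cb.
have Pc : inP (x + c *: d) := sandwich lac lcb Pa Pb.
rewrite !ML_eq; set h := fun s => f (toK s).
have Ea := tele_line h x d a c; have Eb := tele_line h x d c b.
set U := \sum_(m < n) _ in Ea; set V := \sum_(m < n) _ in Eb.
have UV : V <= U.
  rewrite /U /V; apply: ler_sum => m _; apply: ler_sum => j _.
  apply: ler_wpM2l; first exact: dp.
  rewrite !Bml; apply: ML_anti; first exact: anti_dh.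
  - have [H1 H2] := hyb_between m lac; exact: sandwich H1 H2 Pa Pc.
  - have [H1 H2] := hyb_between m lcb; exact: sandwich H1 H2 Pc Pb.
  - exact: hyb_mono.
rewrite -subr_ge0.
set Fa := ML h (x + a *: d) in Ea *; set Fb := ML h (x + b *: d) in Eb *;
set Fc := ML h (x + c *: d) in Ea Eb *.
have -> : Fc - ((1 - l) * Fa + l * Fb) = (1 - l) * (Fc - Fa) - l * (Fb - Fc) by ring.
rewrite Ea Eb.
have -> : (1 - l) * ((c - a) * U) - l * ((b - c) * V) = (l * (1 - l) * (b - a)) * (U - V).
  by rewrite /c; ring.
apply: mulr_ge0; last by rewrite subr_ge0.
apply: mulr_ge0; last by rewrite subr_ge0.
by apply: mulr_ge0; rewrite ?subr_ge0.
Qed.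
End ML.

Theorem mainTheorem3 (R : realType) (n k : nat) (f : ktuple n k -> R) :
  (0 < k)%N ->
  k_submodular f ->
  (* (1) concavity along nonnegative directions *)
  (forall (x d : 'M[R]_(n, k)), inP x -> (forall i j, 0 <= d i j) ->
     concave_on (fun t => inP (x + t *: d)) (fun t => multilinF f (x + t *: d)))
  /\
  (* (2) convexity along e_{i1,j1} - e_{i2,j2}, i1 <> i2 *)
  (forall (x : 'M[R]_(n, k)) (i1 i2 : 'I_n) (j1 j2 : 'I_k), inP x -> i1 != i2 ->
     let d := delta_mx i1 j1 - delta_mx i2 j2 in
     convex_on (fun t => inP (x + t *: d)) (fun t => multilinF f (x + t *: d)))
  /\
  (* (3) dF/dx_{i,j} does not depend on x_{i,1},...,x_{i,k} *)
  (forall (i : 'I_n) (j : 'I_k) (x y : 'M[R]_(n, k)),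
     (forall (i' : 'I_n) (j' : 'I_k), i' != i -> x i' j' = y i' j') ->
     partialF f i j x = partialF f i j y)
  /\
  (* (4) antitone gradient on P *)
  (forall (x y : 'M[R]_(n, k)), inP x -> inP y -> (forall i j, x i j <= y i j) ->
     forall (i : 'I_n) (j : 'I_k), partialF f i j y <= partialF f i j x).
Proof.
move=> _ fs; set h := fun s => f (toK s).
split.
  move=> x d Px dp a b l Pa Pb l01.
  case: (lerP a b) => ab; first exact: concave_core.
  have l01' : 0 <= 1 - l <= 1 by case/andP: l01 => l0 l1; apply/andP; split; lra.
  have := concave_core fs dp Pb Pa l01' (ltW ab).
  have -> : 1 - (1 - l) = l by ring.
  by rewrite addrC [X in _ <= multilinF f (x + X *: d)]addrC.
split.
  move=> x i1 i2 j1 j2 Px ne d a b l Pa Pb /andP [l0 l1].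
  set N := Bb i2 j2 (dh i1 j1 h) x.
  have N0 : N <= 0 by apply: Bneg; [exact: anti_dh | exact: inP_rowok].
  have phiE : forall t, multilinF f (x + t *: d) =
      ML h x - t * Bb i2 j2 h x + t * ML (dh i1 j1 h) x - N * (t * t).
    move=> t.
    have -> : x + t *: d = (x + (- t) *: delta_mx i2 j2) + t *: delta_mx i1 j1.
      by apply/matrixP => p q; rewrite /d !mxE; ring.
    rewrite ML_eq -/h (rowstep_delta i1 j1 h (x + (-t) *: delta_mx i2 j2) t).
    rewrite (rowstep_delta i2 j2 h x) (Bml i1 j1 h) (rowstep_delta i2 j2 _ x) /N; ring.
  rewrite !phiE -subr_ge0.
  set A := ML h x; set B := Bb i2 j2 h x; set C := ML (dh i1 j1 h) x.
  have -> : (1 - l) * (A - a * B + a * C - N * (a * a)) + l * (A - b * B + b * C - N * (b * b)) -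
    (A - ((1 - l) * a + l * b) * B + ((1 - l) * a + l * b) * C -
     N * (((1 - l) * a + l * b) * ((1 - l) * a + l * b))) =
    (- N) * (l * (1 - l) * ((a - b) * (a - b))) by ring.
  apply: mulr_ge0; first by rewrite oppr_ge0.
  apply: mulr_ge0; last by rewrite -expr2 sqr_ge0.
  by apply: mulr_ge0; rewrite ?subr_ge0.
split.
  by move=> i j x y A; rewrite !partialE; apply: Bb_eq.
move=> x y Px Py xy i j; rewrite !partialE !Bml.
by apply: ML_anti => //; exact: anti_dh.
Qed.
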